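(* Let $G=(V,E)$ be a directed network with link set $A=E$. For each origin–destination (OD) pair $(o,d)$ let $K_{od}$ be a finite nonempty set of paths, $q_{od}\ge 0$ the demand, and $\delta^{od}_{a,k}\in\{0,1\}$ indicate whether path $k\in K_{od}$ uses link $a$. Let $\xi$ be a random network state, and for each link $a$ let $$t_a(x,\xi)=t_a^0(\xi)\Big[1+\alpha_a(\xi)\big(x/c_a(\xi)\big)^{\beta_a(\xi)}\Big]+\Delta_a(\xi),\qquad x\ge 0,$$ with $t_a^0(\xi)>0$, $c_a(\xi)>0$, $\alpha_a(\xi)\ge 0$, $\beta_a(\xi)\ge 1$, $\Delta_a(\xi)\ge 0$ (with all expectations below finite). Let $\theta>0$. For path flows $f=(f^{od}_k)$ define link flows $x_a=\sum_{o,d}\sum_{k\in K_{od}} f^{od}_k\delta^{od}_{a,k}$ and $$Z(f,\xi)=\sum_{a\in A}\int_0^{x_a} t_a(\omega,\xi)\,d\omega+\frac1\theta\sum_{o,d}\sum_{k\in K_{od}}\Big[(f^{od}_k+1)\ln(f^{od}_k+1)-f^{od}_k\Big].$$ Then the objective $f\mapsto \mathbb{E}[Z(f,\xi)]$ is convex on $\{f\ge 0\}$, and the problem of minimizing $\mathbb{E}[Z(f,\xi)]$ subject to $\sum_{k\in K_{od}} f^{od}_k=q_{od}$ for all $(o,d)$ and $f^{od}_k\ge 0$ has a unique optimal path flow vector.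
   Context: This is the truncated-logit stochastic user equilibrium (TSUE) program with an extended BPR link travel time function whose parameters depend on the random state $\xi$. *)

(* Defs.v *)
From HB Require Import structures.
From mathcomp Require Import all_boot all_order all_algebra.
From mathcomp Require Import all_classical all_reals all_analysis.
Set Implicit Arguments. Unset Strict Implicit. Unset Printing Implicit Defensive.
Import Order.TTheory GRing.Theory Num.Theory.
Local Open Scope classical_set_scope.
Local Open Scope ring_scope.

Section TSUE.
Variables (R : realType) (d : measure_display) (T : measurableType d).
(* A : links, W : OD pairs, K : all paths (disjoint union of the K_od),
   od k : the OD pair served by path k, delta k a : path k uses link a. *)
Variables (A W K : finType) (od : K -> W) (delta : K -> A -> bool).

Definition link_time (t0 c alpha beta Delta : A -> T -> R) (a : A) (x : R) (xi : T) : R :=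
  t0 a xi * (1 + alpha a xi * powR (x / c a xi) (beta a xi)) + Delta a xi.

Definition link_flow (f : K -> R) (a : A) : R :=
  \sum_(k : K) f k * (delta k a)%:R.

Definition Zobj (t0 c alpha beta Delta : A -> T -> R) (theta : R) (f : K -> R) (xi : T) : R :=
  \sum_(a : A) Rintegral lebesgue_measure `[0, link_flow f a]
       (fun w => link_time t0 c alpha beta Delta a w xi)
  + theta^-1 * \sum_(k : K) ((f k + 1) * ln (f k + 1) - f k).

(* E[Z(f, xi)], real-valued (finite under the integrability hypothesis) *)
Definition EZ (Pr : probability T R) (t0 c alpha beta Delta : A -> T -> R) (theta : R)
  (f : K -> R) : R :=
  fine ('E_Pr[Zobj t0 c alpha beta Delta theta f])%E.

Definition feasible (q : W -> R) (f : K -> R) : Prop :=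
  (forall w : W, \sum_(k : K | od k == w) f k = q w) /\ (forall k, 0 <= f k).
End TSUE.

(* Main.v *)
Require Import Defs.
From HB Require Import structures.
From mathcomp Require Import all_boot all_order all_algebra.
From mathcomp Require Import all_classical all_reals all_analysis.
From mathcomp Require Import lra ring.
Import Order.TTheory GRing.Theory Num.Theory.
Import numFieldNormedType.Exports.
Local Open Scope classical_set_scope.
Local Open Scope ring_scope.
Section Real.
Variable R : realType.

Lemma ln_le_sub1 (z : R) : 0 < z -> ln z <= z - 1.
Proof.
move=> z0; have := expR_ge1Dx (ln z); rewrite lnK ?posrE //; lra.
Qed.

Lemma ln_lt_sub1 (z : R) : 0 < z -> z != 1 -> ln z < z - 1.
Proof.
move=> z0 z1; have : ln z != 0.
  apply: contra z1 => /eqP lz; apply/eqP; rewrite -(lnK (x:=z)) ?posrE// lz expR0//.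
move=> /expR_gt1Dx; rewrite lnK ?posrE //; lra.
Qed.

Lemma key_ln (a b : R) : 0 < a -> 0 < b -> a - b <= a * (ln a - ln b).
Proof.
move=> a0 b0; have := @ln_le_sub1 (b / a) (divr_gt0 b0 a0).
rewrite lnM ?posrE ?invr_gt0 // lnV ?posrE // => H.
have : a * (ln b - ln a) <= a * (b / a - 1) by rewrite ler_pM2l //; lra.
have e : a * (b / a - 1) = b - a by field; rewrite gt_eqF.
rewrite e mulrBr; lra.
Qed.

Lemma key_ln_strict (a b : R) : 0 < a -> 0 < b -> a != b -> a - b < a * (ln a - ln b).
Proof.
move=> a0 b0 ab; have : b / a != 1.
  apply: contra ab => /eqP e; apply/eqP.
  by have := e; move/(congr1 (fun x => x * a)); rewrite mulfVK ?gt_eqF // mul1r => ->.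
move=> /(@ln_lt_sub1 (b / a) (divr_gt0 b0 a0)).
rewrite lnM ?posrE ?invr_gt0 // lnV ?posrE // => H.
have : a * (ln b - ln a) < a * (b / a - 1) by rewrite ltr_pM2l //; lra.
have e : a * (b / a - 1) = b - a by field; rewrite gt_eqF.
rewrite e mulrBr; lra.
Qed.

Definition hfun (x : R) := (x + 1) * ln (x + 1) - x.

Lemma hfun_tangent x y : 0 <= x -> 0 <= y -> hfun x + ln (x + 1) * (y - x) <= hfun y.
Proof.
move=> x0 y0; have := @key_ln (y + 1) (x + 1); rewrite /hfun.
move=> /(_ ltac:(lra) ltac:(lra)); rewrite mulrBr; lra.
Qed.

Lemma tangent_convex (phi s : R -> R) :
  (forall x y, 0 <= x -> 0 <= y -> phi x + s x * (y - x) <= phi y) ->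
  forall x y l, 0 <= x -> 0 <= y -> 0 <= l <= 1 ->
  phi (l * x + (1 - l) * y) <= l * phi x + (1 - l) * phi y.
Proof.
move=> tg x y l x0 y0 /andP[l0 l1].
set z := l * x + (1 - l) * y.
have z0 : 0 <= z by rewrite /z addr_ge0 // mulr_ge0 // subr_ge0.
have H1 := tg z x z0 x0; have H2 := tg z y z0 y0.
have H1' : l * (phi z + s z * (x - z)) <= l * phi x by rewrite ler_wpM2l.
have H2' : (1 - l) * (phi z + s z * (y - z)) <= (1 - l) * phi y
  by rewrite ler_wpM2l // subr_ge0.
have e : l * (phi z + s z * (x - z)) + (1 - l) * (phi z + s z * (y - z)) = phi z.
  by rewrite /z; ring.
lra.
Qed.

Lemma hfun_convex x y l : 0 <= x -> 0 <= y -> 0 <= l <= 1 ->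
  hfun (l * x + (1 - l) * y) <= l * hfun x + (1 - l) * hfun y.
Proof. apply: tangent_convex; exact: hfun_tangent. Qed.

Lemma hfun_strict x y : 0 <= x -> 0 <= y -> x != y ->
  hfun (2^-1 * x + (1 - 2^-1) * y) < 2^-1 * hfun x + (1 - 2^-1) * hfun y.
Proof.
move=> x0 y0 xy.
set m := 2^-1 * x + (1 - 2^-1) * y.
have m0 : 0 <= m by rewrite /m; lra.
have xm : x + 1 != m + 1.
  apply: contra xy => /eqP e; apply/eqP; rewrite /m in e; lra.
have ym : y + 1 != m + 1.
  apply: contra xy => /eqP e; apply/eqP; rewrite /m in e; lra.
have H1 := @key_ln_strict (x + 1) (m + 1) ltac:(lra) ltac:(lra) xm.
have H2 := @key_ln_strict (y + 1) (m + 1) ltac:(lra) ltac:(lra) ym.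
rewrite /hfun.
have e : (m + 1) = 2^-1 * (x + 1) + 2^-1 * (y + 1) by rewrite /m; lra.
rewrite !mulrBr in H1 H2.
have E : (m + 1) * ln (m + 1) = 2^-1 * (x + 1) * ln (m + 1) + 2^-1 * (y + 1) * ln (m + 1)
  by rewrite e; ring.
rewrite E; rewrite /m; lra.
Qed.

Lemma hfun_ge0 x : 0 <= x -> 0 <= hfun x.
Proof.
move=> x0; have := @hfun_tangent 0 x (lexx 0) x0; rewrite /hfun add0r ln1 !mul0r mul1r subr0; lra.
Qed.

Lemma ln1p_le (x : R) : 0 <= x -> 0 <= ln (x + 1) <= x.
Proof.
move=> x0; apply/andP; split; first by rewrite ln_ge0 //; lra.
have := @ln_le_sub1 (x + 1) ltac:(lra); lra.
Qed.

End Real.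
Section Link.
Variable R : realType.
Variables (T0 C al be De : R).
Hypotheses (T0p : 0 < T0) (Cp : 0 < C) (alp : 0 <= al) (bep : 1 <= be) (Dep : 0 <= De).

Definition tl (w : R) := T0 * (1 + al * powR (w / C) be) + De.

Lemma tl_ge0 w : 0 <= tl w.
Proof.
rewrite /tl; apply: addr_ge0 => //; apply: mulr_ge0; first exact: ltW.
by apply: addr_ge0 => //; apply: mulr_ge0 => //; exact: powR_ge0.
Qed.

Lemma tl_mono x y : 0 <= x -> x <= y -> tl x <= tl y.
Proof.
move=> x0 xy; rewrite /tl; apply: lerD => //; apply: ler_wpM2l; first exact: ltW.
apply: lerD => //; apply: ler_wpM2l => //.
apply: ge0_ler_powR; first by apply: le_trans bep.
- by rewrite nnegrE divr_ge0 // ltW.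
- by rewrite nnegrE divr_ge0 ?(le_trans x0 xy) ?ltW.
- by rewrite ler_pM2r // invr_gt0.
Qed.

Lemma tl_meas : measurable_fun setT tl.
Proof.
apply: measurable_realfun.measurable_funD => //; apply: measurable_realfun.measurable_funM => //.
apply: measurable_realfun.measurable_funD => //; apply: measurable_realfun.measurable_funM => //.
have mg : measurable_fun setT (fun x : R => x / C).
  exact: measurable_realfun.measurable_funM.
exact: (measurableT_comp (measurable_realfun.measurable_powR be) mg).
Qed.

Lemma tl_int (x y : R) : 0 <= x -> lebesgue_measure.-integrable [set` `[x, y]] (EFin \o tl).
Proof.
move=> x0.
apply: measurable_bounded_integrable => //.
- have h := lebesgue_measure_itv `[x, y]; move: h; rewrite /=; move=> ->.
  by case: ifP => // _; rewrite ltry.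
- exact: measurable_funTS tl_meas.
- exists (tl y); split; first exact: num_real.
  move=> M HM z /=; rewrite in_itv /= => /andP[xz zy].
  rewrite ger0_norm ?tl_ge0 //; apply: ltW; apply: le_lt_trans HM.
  apply: tl_mono => //; exact: le_trans xz.
Qed.

Definition Fl (x : R) := Rintegral lebesgue_measure `[0, x] tl.

Lemma tl_int_oc (x y : R) : 0 <= x -> lebesgue_measure.-integrable [set` `]x, y]] (EFin \o tl).
Proof.
move=> x0.
have sub : [set` `]x, y]] `<=` [set` `[x, y]].
  by move=> z /=; rewrite !in_itv /= => /andP[/ltW -> ->].
move: (tl_int x y x0); apply: integrableS => //.
Qed.

Lemma Fl_diff x y : 0 <= x -> x <= y -> Fl y - Fl x = Rintegral lebesgue_measure `]x, y] tl.
Proof.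
move=> x0 xy; rewrite /Fl.
have := @Rintegral_itvB R tl (BLeft 0) (BRight y) x (tl_int 0 y (lexx 0)).
by rewrite !bnd_simp => ->.
Qed.

Lemma mu_oc (x y : R) : x <= y -> fine (lebesgue_measure [set` `]x, y]]) = y - x.
Proof.
move=> xy; have h := lebesgue_measure_itv `]x, y]; move: h; rewrite /=; move=> ->.
rewrite lte_fin; case: ifPn => H; first by [].
have -> : y = x by apply: le_anti; rewrite xy andbT leNgt.
by rewrite subrr.
Qed.

Lemma cst_int_oc (x y k : R) : lebesgue_measure.-integrable [set` `]x, y]] (EFin \o cst k).
Proof.
apply: measurable_bounded_integrable => //.
- have h := lebesgue_measure_itv `]x, y]; move: h; rewrite /=; move=> ->.
  by case: ifP => // _; rewrite ltry.
- exists `|k|; split; first exact: num_real.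
  by move=> M HM z _; apply: ltW.
Qed.

Lemma Fl_seg_bounds x y : 0 <= x -> x <= y ->
  tl x * (y - x) <= Fl y - Fl x <= tl y * (y - x).
Proof.
move=> x0 xy; rewrite Fl_diff //; apply/andP; split.
- rewrite -(@mu_oc x y xy) -Rintegral_cst //.
  apply: le_Rintegral => //; [exact: cst_int_oc | exact: (tl_int_oc x y x0) |].
  move=> z /=; rewrite in_itv /= => /andP[/ltW xz zy]; exact: tl_mono.
- rewrite -(@mu_oc x y xy) -Rintegral_cst //.
  apply: le_Rintegral => //; [exact: (tl_int_oc x y x0) | exact: cst_int_oc |].
  move=> z /=; rewrite in_itv /= => /andP[/ltW xz zy]; apply: tl_mono => //.
  exact: le_trans xz.
Qed.

Lemma Fl_tangent x y : 0 <= x -> 0 <= y -> Fl x + tl x * (y - x) <= Fl y.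
Proof.
move=> x0 y0; have [xy|yx] := leP x y.
  by have /andP[H _] := @Fl_seg_bounds x y x0 xy; lra.
have /andP[_ H] := @Fl_seg_bounds y x y0 (ltW yx).
have e : tl x * (y - x) = - (tl x * (x - y)) by ring.
lra.
Qed.

Lemma Fl_ge0 x : 0 <= Fl x.
Proof. by apply: Rintegral_ge0 => z _; exact: tl_ge0. Qed.

End Link.

Section Expect.
Variables (R : realType) (d : measure_display) (T : measurableType d) (Pr : probability T R).

Lemma int_comb (F G : T -> R) (a b k : R) :
  Pr.-integrable setT (EFin \o F) -> Pr.-integrable setT (EFin \o G) ->
  Pr.-integrable setT (EFin \o (fun x => a * F x + b * G x + k)) /\
  Rintegral Pr setT (fun x => a * F x + b * G x + k) =
    a * Rintegral Pr setT F + b * Rintegral Pr setT G + k.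
Proof.
move=> iF iG.
have iaF : Pr.-integrable setT (EFin \o (fun x => a * F x)).
  apply: (eq_integrable _ _ _ _ (integrableZl measurableT a iF)) => //.
have ibG : Pr.-integrable setT (EFin \o (fun x => b * G x)).
  apply: (eq_integrable _ _ _ _ (integrableZl measurableT b iG)) => //.
have ik : Pr.-integrable setT (EFin \o (fun _ : T => k)).
  exact: finite_measure_integrable_cst.
have iS : Pr.-integrable setT (EFin \o (fun x => a * F x + b * G x)).
  apply: (eq_integrable _ _ _ _ (integrableD measurableT iaF ibG)) => //.
split.
  apply: (eq_integrable _ _ _ _ (integrableD measurableT iS ik)) => //.
rewrite RintegralD //= RintegralD //= RintegralZl // RintegralZl //.
rewrite Rintegral_cst //.
have h := probability_setT Pr; move: h => /= ->.
by rewrite mulr1.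
Qed.

End Expect.

Section Main.
Variables (R : realType) (d : measure_display) (T : measurableType d) (Pr : probability T R)
  (A W K : finType) (od : K -> W) (delta : K -> A -> bool)
  (t0 c alpha beta Delta : A -> T -> R) (theta : R).
Hypotheses (t0p : forall a xi, 0 < t0 a xi) (cp : forall a xi, 0 < c a xi)
  (alp : forall a xi, 0 <= alpha a xi) (bep : forall a xi, 1 <= beta a xi)
  (Dep : forall a xi, 0 <= Delta a xi) (thp : 0 < theta).

Definition Fa a xi := @Fl R (t0 a xi) (c a xi) (alpha a xi) (beta a xi) (Delta a xi).
Definition ta a xi := @tl R (t0 a xi) (c a xi) (alpha a xi) (beta a xi) (Delta a xi).
Definition LP (f : K -> R) xi := \sum_(a : A) Fa a xi (link_flow delta f a).
Definition Ent (f : K -> R) := \sum_(k : K) @hfun R (f k).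
Definition Zf f xi := Zobj delta t0 c alpha beta Delta theta f xi.

Lemma Z_split f xi : Zf f xi = LP f xi + theta^-1 * Ent f.
Proof. by []. Qed.

Definition comb l (f g : K -> R) := fun k => l * f k + (1 - l) * g k.

Lemma X_comb (f g : K -> R) (l : R) (a : A) : link_flow delta (comb l f g) a
  = l * link_flow delta f a + (1 - l) * link_flow delta g a.
Proof.
rewrite /link_flow !mulr_sumr -big_split; apply: eq_bigr => k _ /=; rewrite /comb; ring.
Qed.

Lemma X_ge0 (f : K -> R) (a : A) : (forall k, 0 <= f k) -> 0 <= link_flow delta f a.
Proof. by move=> f0; apply: sumr_ge0 => k _; rewrite mulr_ge0 ?ler0n. Qed.

Lemma Fa_tangent a xi x y : 0 <= x -> 0 <= y -> Fa a xi x + ta a xi x * (y - x) <= Fa a xi y.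
Proof. exact: Fl_tangent. Qed.

Lemma LP_convex f g l xi : (forall k, 0 <= f k) -> (forall k, 0 <= g k) -> 0 <= l <= 1 ->
  LP (comb l f g) xi <= l * LP f xi + (1 - l) * LP g xi.
Proof.
move=> f0 g0 hl; rewrite /LP !mulr_sumr -big_split; apply: ler_sum => a _ /=.
rewrite X_comb; apply: (@tangent_convex R _ _ (@Fa_tangent a xi)) => //; exact: X_ge0.
Qed.

Lemma Ent_convex f g l : (forall k, 0 <= f k) -> (forall k, 0 <= g k) -> 0 <= l <= 1 ->
  Ent (comb l f g) <= l * Ent f + (1 - l) * Ent g.
Proof.
move=> f0 g0 hl; rewrite /Ent !mulr_sumr -big_split; apply: ler_sum => k _ /=.
by apply: hfun_convex.
Qed.

Lemma Ent_strict f g : (forall k, 0 <= f k) -> (forall k, 0 <= g k) -> f <> g ->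
  Ent (comb 2^-1 f g) < 2^-1 * Ent f + (1 - 2^-1) * Ent g.
Proof.
move=> f0 g0 fg.
have [k0 hk0] : exists k0, f k0 != g k0.
  apply: contrapT => H; apply: fg; apply: funext => k.
  by apply/eqP; apply: contrapT => /negP hk; apply: H; exists k.
rewrite /Ent !mulr_sumr -big_split /= (bigD1 k0) //= [X in _ < X](bigD1 k0) //=.
apply: ltr_leD; first by apply: hfun_strict.
apply: ler_sum => k _; apply: hfun_convex; [exact: f0 | exact: g0 | lra].
Qed.

Lemma Z_comb f g l xi : (forall k, 0 <= f k) -> (forall k, 0 <= g k) -> 0 <= l <= 1 ->
  Zf (comb l f g) xi <= l * Zf f xi + (1 - l) * Zf g xi
     + - (theta^-1 * (l * Ent f + (1 - l) * Ent g - Ent (comb l f g))).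
Proof.
move=> f0 g0 hl; rewrite !Z_split.
have := LP_convex f g l xi f0 g0 hl.
set a1 := LP _ xi; set a2 := LP f xi; set a3 := LP g xi.
set e1 := Ent _; set e2 := Ent f; set e3 := Ent g.
move=> H.
have -> : l * (a2 + theta^-1 * e2) + (1 - l) * (a3 + theta^-1 * e3) +
    - (theta^-1 * (l * e2 + (1 - l) * e3 - e1)) =
    (l * a2 + (1 - l) * a3) + theta^-1 * e1 by ring.
by rewrite lerD2r.
Qed.

Lemma EZ_R f : EZ delta Pr t0 c alpha beta Delta theta f = Rintegral Pr setT (Zf f).
Proof. by rewrite /EZ unlock. Qed.

Hypothesis HI : forall f : K -> R, (forall k, 0 <= f k) ->
     Pr.-integrable setT (fun xi => (Zobj delta t0 c alpha beta Delta theta f xi)%:E).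

Lemma comb_ge0 f g l : (forall k, 0 <= f k) -> (forall k, 0 <= g k) -> 0 <= l <= 1 ->
  forall k, 0 <= comb l f g k.
Proof.
move=> f0 g0 /andP[l0 l1] k; rewrite /comb addr_ge0 // mulr_ge0 // subr_ge0 //.
Qed.

Lemma EZ_comb f g l : (forall k, 0 <= f k) -> (forall k, 0 <= g k) -> 0 <= l <= 1 ->
  EZ delta Pr t0 c alpha beta Delta theta (comb l f g) <=
  l * EZ delta Pr t0 c alpha beta Delta theta f
  + (1 - l) * EZ delta Pr t0 c alpha beta Delta theta g
  + - (theta^-1 * (l * Ent f + (1 - l) * Ent g - Ent (comb l f g))).
Proof.
move=> f0 g0 hl; rewrite !EZ_R.
have [i e] := @int_comb R d T Pr (Zf f) (Zf g) l (1 - l) (- (theta^-1 * (l * Ent f + (1 - l) * Ent g - Ent (comb l f g))))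
   (HI f f0) (HI g g0).
rewrite -e; apply: le_Rintegral => //; first exact: (HI (comb l f g) (comb_ge0 f g l f0 g0 hl)).
by move=> xi _; apply: Z_comb.
Qed.

Lemma Zf_ge0 f xi : (forall k, 0 <= f k) -> 0 <= Zf f xi.
Proof.
move=> f0; rewrite Z_split; apply: addr_ge0.
  by apply: sumr_ge0 => a _; apply: Fl_ge0.
apply: mulr_ge0; first by rewrite invr_ge0 ltW.
by apply: sumr_ge0 => k _; apply: hfun_ge0.
Qed.

Lemma Z_tangent f g xi : (forall k, 0 <= f k) -> (forall k, 0 <= g k) ->
  Zf g xi <= Zf f xi + (\sum_(a : A) ta a xi (link_flow delta g a) *
        (link_flow delta g a - link_flow delta f a)
     + theta^-1 * \sum_(k : K) ln (g k + 1) * (g k - f k)).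
Proof.
move=> f0 g0; rewrite !Z_split.
have H1 : LP g xi <= LP f xi + \sum_(a : A) ta a xi (link_flow delta g a) *
        (link_flow delta g a - link_flow delta f a).
  rewrite /LP -big_split /=; apply: ler_sum => a _.
  have := @Fa_tangent a xi (link_flow delta g a) (link_flow delta f a)
    (X_ge0 g a g0) (X_ge0 f a f0).
  have -> : ta a xi (link_flow delta g a) * (link_flow delta f a - link_flow delta g a)
    = - (ta a xi (link_flow delta g a) * (link_flow delta g a - link_flow delta f a)) by ring.
  lra.
have H2 : Ent g <= Ent f + \sum_(k : K) ln (g k + 1) * (g k - f k).
  rewrite /Ent -big_split /=; apply: ler_sum => k _.
  have := @hfun_tangent R (g k) (f k) (g0 k) (f0 k).
  have -> : ln (g k + 1) * (f k - g k) = - (ln (g k + 1) * (g k - f k)) by ring.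
  lra.
have H3 : theta^-1 * Ent g <= theta^-1 * (Ent f + \sum_(k : K) ln (g k + 1) * (g k - f k)).
  by apply: ler_wpM2l => //; rewrite invr_ge0 ltW.
rewrite mulrDr in H3; lra.
Qed.

Lemma X_le (f : K -> R) (a : A) : (forall k, 0 <= f k) -> link_flow delta f a <= \sum_(k : K) f k.
Proof.
move=> f0; rewrite /link_flow; apply: ler_sum => k _.
by case: (delta k a); rewrite ?mulr1 ?mulr0.
Qed.

Lemma X_diff (f g : K -> R) (a : A) : `|link_flow delta g a - link_flow delta f a| <= \sum_(k : K) `|g k - f k|.
Proof.
rewrite /link_flow -sumrB; apply: le_trans (ler_norm_sum _ _ _) _.
apply: ler_sum => k _; rewrite -mulrBl; case: (delta k a).
  by rewrite mulr1.
by rewrite mulr0 normr0.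
Qed.

Variable Q : R.
Hypothesis Q0 : 0 <= Q.
Definition M := \sum_(k : K) Q.
Definition f2 := fun _ : K => M + 1.

Lemma M_ge0 : 0 <= M.
Proof. by apply: sumr_ge0. Qed.

Lemma f2_ge0 k : 0 <= f2 k.
Proof. rewrite /f2; have := M_ge0; lra. Qed.

Lemma slope_bound a xi x : 0 <= x <= M -> (exists k, delta k a) ->
  ta a xi x <= Zf f2 xi.
Proof.
move=> /andP[x0 xM] [k1 hk1].
have Xf2 : M + 1 <= link_flow delta f2 a.
  rewrite /link_flow (bigD1 k1) //= hk1 mulr1 /f2 lerDl.
  by apply: sumr_ge0 => k _; rewrite mulr_ge0 ?ler0n ?f2_ge0.
have M0 := M_ge0.
have t1 : ta a xi x <= ta a xi M by apply: tl_mono.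
have t2 := @Fa_tangent a xi M (link_flow delta f2 a) M0 ltac:(lra).
have t3 : 0 <= Fa a xi M by apply: Fl_ge0.
have t4 : 0 <= ta a xi M by apply: tl_ge0.
have t5 : ta a xi M <= ta a xi M * (link_flow delta f2 a - M).
  by rewrite ler_peMr //; lra.
have t6 : Fa a xi (link_flow delta f2 a) <= LP f2 xi.
  rewrite /LP (bigD1 a) //= lerDl; apply: sumr_ge0 => b _; exact: Fl_ge0.
have t7 : LP f2 xi <= Zf f2 xi.
  rewrite Z_split lerDl; apply: mulr_ge0; first by rewrite invr_ge0 ltW.
  by apply: sumr_ge0 => k _; apply: hfun_ge0; exact: f2_ge0.
lra.
Qed.

Definition dist1 (f g : K -> R) := \sum_(k : K) `|g k - f k|.

Lemma Z_lip f g xi : (forall k, 0 <= f k <= Q) -> (forall k, 0 <= g k <= Q) ->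
  Zf g xi <= Zf f xi + (#|A|%:R * dist1 f g) * Zf f2 xi + theta^-1 * Q * dist1 f g.
Proof.
move=> fQ gQ.
have f0 k : 0 <= f k by case/andP: (fQ k).
have g0 k : 0 <= g k by case/andP: (gQ k).
have Hd : 0 <= dist1 f g by apply: sumr_ge0.
have Hz : 0 <= Zf f2 xi by apply: Zf_ge0; exact: f2_ge0.
have := Z_tangent f g xi f0 g0.
have H1 : \sum_(a : A) ta a xi (link_flow delta g a) *
        (link_flow delta g a - link_flow delta f a) <= #|A|%:R * dist1 f g * Zf f2 xi.
  have -> : #|A|%:R * dist1 f g * Zf f2 xi = \sum_(a : A) (Zf f2 xi * dist1 f g).
    by rewrite sumr_const -mulr_natl; ring.
  apply: ler_sum => a _.
  have [[k1 hk1]|nk] := pselect (exists k, delta k a).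
    have ta0 : 0 <= ta a xi (link_flow delta g a) by apply: tl_ge0.
    apply: le_trans (_ : ta a xi (link_flow delta g a) *
       `|link_flow delta g a - link_flow delta f a| <= _).
      by apply: ler_wpM2l => //; exact: ler_norm.
    apply: ler_pM => //.
      apply: slope_bound; last by exists k1.
      rewrite X_ge0 //=; apply: le_trans (X_le g a g0) _.
      by apply: ler_sum => k _; case/andP: (gQ k).
    exact: X_diff.
  have X0 h : link_flow delta h a = 0.
    rewrite /link_flow big1 // => k _.
    case E: (delta k a); last by rewrite mulr0.
    by exfalso; apply: nk; exists k.
  by rewrite !X0 subrr mulr0 mulr_ge0.
have H2 : theta^-1 * \sum_(k : K) ln (g k + 1) * (g k - f k) <= theta^-1 * Q * dist1 f g.
  rewrite -mulrA; apply: ler_wpM2l; first by rewrite invr_ge0 ltW.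
  rewrite /dist1 mulr_sumr; apply: ler_sum => k _.
  have /andP[l0 l1] := @ln1p_le R (g k) (g0 k).
  apply: le_trans (_ : ln (g k + 1) * `|g k - f k| <= _).
    by apply: ler_wpM2l => //; exact: ler_norm.
  apply: ler_wpM2r => //; apply: le_trans l1 _; by case/andP: (gQ k).
lra.
Qed.

Lemma EZ_lip f g : (forall k, 0 <= f k <= Q) -> (forall k, 0 <= g k <= Q) ->
  EZ delta Pr t0 c alpha beta Delta theta g <=
  EZ delta Pr t0 c alpha beta Delta theta f
  + (#|A|%:R * EZ delta Pr t0 c alpha beta Delta theta f2 + theta^-1 * Q) * dist1 f g.
Proof.
move=> fQ gQ.
have f0 k : 0 <= f k by case/andP: (fQ k).
have g0 k : 0 <= g k by case/andP: (gQ k).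
rewrite !EZ_R.
have [i e] := @int_comb R d T Pr (Zf f) (Zf f2) 1 (#|A|%:R * dist1 f g) (theta^-1 * Q * dist1 f g)
   (HI f f0) (HI f2 f2_ge0).
have -> : Rintegral Pr setT (Zf f) + (#|A|%:R * Rintegral Pr setT (Zf f2) + theta^-1 * Q) * dist1 f g
  = 1 * Rintegral Pr setT (Zf f) + #|A|%:R * dist1 f g * Rintegral Pr setT (Zf f2)
    + theta^-1 * Q * dist1 f g by ring.
rewrite -e; apply: le_Rintegral => //; first exact: (HI g g0).
by move=> xi _ /=; rewrite mul1r; apply: Z_lip.
Qed.

End Main.

Section Topo.
Variables (R : realType) (K : finType).

Definition vf (v : 'rV[R]_#|K|) : K -> R := fun k => v ord0 (enum_rank k).
Definition gv (g : K -> R) : 'rV[R]_#|K| := \row_i g (enum_val i).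

Lemma vf_gv g : vf (gv g) = g.
Proof. by apply: funext => k; rewrite /vf /gv mxE enum_rankK. Qed.

Definition dist1t (f g : K -> R) := \sum_(k : K) `|g k - f k|.

Lemma ball_entry (v u : 'rV[R]_#|K|) (e : R) : ball v e u -> forall i, `|v ord0 i - u ord0 i| < e.
Proof.
move=> [_ H] i; have := H ord0 i. by rewrite /ball /=.
Qed.

Lemma exists_min (S : set (K -> R)) (F : (K -> R) -> R) (Q L : R) :
  (exists f, S f) ->
  (forall f, S f -> forall k, -Q <= f k <= Q) ->
  closed [set v : 'rV[R]_#|K| | S (vf v)] ->
  0 <= L ->
  (forall f g, S f -> S g -> F g <= F f + L * dist1t f g) ->
  exists f, S f /\ forall g, S g -> F f <= F g.
Proof.
move=> [f0 Sf0] SQ Scl L0 Flip.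
set SV := [set v : 'rV[R]_#|K| | S (vf v)].
have cSV : compact SV.
  apply: (subclosed_compact Scl (rV_compact (A := fun _ => `[-Q, Q]%classic) _)).
    by move=> _; exact: segment_compact.
  move=> v /= Sv i; rewrite in_itv /=.
  by have := SQ _ Sv (enum_val i); rewrite /vf enum_valK.
have SV0 : SV !=set0 by exists (gv f0); rewrite /SV /= vf_gv.
have cont : {within SV, continuous (F \o vf)}.
  rewrite continuous_subspace_in => v; rewrite inE => Sv.
  apply/cvgrPdist_lt => e e0.
  rewrite -nbhs_subspace_in // near_withinE.
  set c := L * #|K|%:R.
  have c0 : 0 <= c by rewrite /c mulr_ge0.
  set dl := e / (c + 1).
  have dl0 : 0 < dl by rewrite /dl divr_gt0 //; lra.
  have key : c * dl < e.
    rewrite /dl mulrA ltr_pdivrMr; last lra.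
    by rewrite mulrDr mulr1 [c * e]mulrC ltrDl.
  apply/nbhs_ballP; exists dl => // u Bu SVu /=.
  have hd : dist1t (vf v) (vf u) <= \sum_(k : K) dl.
    apply: ler_sum => k _; rewrite /vf distrC; apply: ltW; exact: ball_entry Bu _.
  rewrite sumr_const -mulr_natl in hd.
  have hs : dist1t (vf u) (vf v) = dist1t (vf v) (vf u).
    by apply: eq_bigr => k _; rewrite distrC.
  have h1 := Flip _ _ Sv SVu; have h2 := Flip _ _ SVu Sv.
  rewrite hs in h2.
  have h3 : L * dist1t (vf v) (vf u) <= c * dl.
    by rewrite /c -mulrA; apply: ler_wpM2l.
  rewrite /from_subspace /= ltr_norml; apply/andP; split; lra.
have [v Sv vmin] := EVT_min_rV SV0 cSV cont.
exists (vf v); split; first by rewrite inE in Sv.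
move=> g Sg; have := vmin (gv g); rewrite /= vf_gv; apply.
by rewrite inE /SV /= vf_gv.
Qed.

Lemma cont_sum (s : seq K) (P : pred K) (G : K -> 'rV[R]_#|K| -> R) :
  (forall i, continuous (G i)) -> continuous (fun v => \sum_(i <- s | P i) G i v).
Proof.
move=> Gc; elim: s => [|i s IH].
  under eq_fun do rewrite big_nil; exact: cst_continuous.
under eq_fun do rewrite big_cons.
case: (P i) => //= x; exact: (continuousD (Gc i x) (IH x)).
Qed.

Lemma vf_cont k : continuous (fun v : 'rV[R]_#|K| => vf v k).
Proof. exact: coord_continuous. Qed.

Lemma closed_feas (W : finType) (od : K -> W) (q : W -> R) :
  closed [set v : 'rV[R]_#|K| | feasible od q (vf v)].
Proof.
have -> : [set v : 'rV[R]_#|K| | feasible od q (vf v)] =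
  (\bigcap_(w in setT) ((fun v => \sum_(k <- enum K | od k == w) vf v k) @^-1` [set x | x = q w]))
  `&` (\bigcap_(k in setT) ((fun v => vf v k) @^-1` [set x | 0 <= x])).
  apply/seteqP; split.
    move=> v /= [H1 H2]; split.
      by move=> w _ /=; rewrite -H1 big_enum_cond.
    by move=> k _ /=.
  move=> v /= [H1 H2]; split.
    by move=> w; have := H1 w I; rewrite /= big_enum_cond.
  by move=> k; exact: (H2 k I).
apply: closedI; apply: closed_bigI => i _; apply: preimage_closed.
- by move=> v _; apply: cont_sum => k; exact: vf_cont.
- exact: closed_eq.
- by move=> v _; exact: vf_cont.
- exact: closed_ge.
Qed.

End Topo.


Lemma feas_bound (R : realType) (W K : finType) (od : K -> W) (q : W -> R) f :
  (forall w, 0 <= q w) -> feasible od q f -> forall k, 0 <= f k <= \sum_(w : W) q w.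
Proof.
move=> q0 [H1 H2] k; rewrite H2 /=.
apply: le_trans (_ : q (od k) <= _).
  rewrite -H1 (bigD1 k) //= lerDl; apply: sumr_ge0 => i _; exact: H2.
by rewrite (bigD1 (od k)) //= lerDl; apply: sumr_ge0 => w _; exact: q0.
Qed.

Lemma feas_comb (R : realType) (W K : finType) (od : K -> W) (q : W -> R) f g l :
  0 <= l <= 1 -> feasible od q f -> feasible od q g -> feasible od q (comb R K l f g).
Proof.
move=> hl [F1 F2] [G1 G2]; split.
  move=> w; rewrite /comb big_split /= -!mulr_sumr F1 G1; ring.
exact: comb_ge0.
Qed.

Theorem proposition1 (R : realType) (d : measure_display) (T : measurableType d)
  (Pr : probability T R)
  (A W K : finType) (od : K -> W) (delta : K -> A -> bool)
  (q : W -> R) (t0 c alpha beta Delta : A -> T -> R) (theta : R) :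
  (forall w : W, exists k : K, od k = w) ->
  (forall w : W, 0 <= q w) ->
  (forall a xi, 0 < t0 a xi) ->
  (forall a xi, 0 < c a xi) ->
  (forall a xi, 0 <= alpha a xi) ->
  (forall a xi, 1 <= beta a xi) ->
  (forall a xi, 0 <= Delta a xi) ->
  0 < theta ->
  (forall f : K -> R, (forall k, 0 <= f k) ->
     Pr.-integrable setT (fun xi => (Zobj delta t0 c alpha beta Delta theta f xi)%:E)) ->
  (forall (f g : K -> R) (l : R), (forall k, 0 <= f k) -> (forall k, 0 <= g k) ->
     0 <= l <= 1 ->
     EZ delta Pr t0 c alpha beta Delta theta (fun k => l * f k + (1 - l) * g k)
       <= l * EZ delta Pr t0 c alpha beta Delta theta f
          + (1 - l) * EZ delta Pr t0 c alpha beta Delta theta g)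
  /\
  (exists f : K -> R,
     [/\ feasible od q f,
         (forall g, feasible od q g ->
            EZ delta Pr t0 c alpha beta Delta theta f
              <= EZ delta Pr t0 c alpha beta Delta theta g)
       & (forall h, feasible od q h ->
            (forall g, feasible od q g ->
               EZ delta Pr t0 c alpha beta Delta theta h
                 <= EZ delta Pr t0 c alpha beta Delta theta g) ->
            h = f)]).
Proof.
move=> hod q0 t0p cp alp bep Dep thp HI.
have EZc := @EZ_comb R d T Pr A K delta t0 c alpha beta Delta theta t0p cp alp bep Dep HI.
have thi : 0 <= theta^-1 by rewrite invr_ge0 ltW.
split.
  move=> f g l f0 g0 hl.
  have H := EZc f g l f0 g0 hl.
  have H2 := Ent_convex R K f g l f0 g0 hl.
  have H3 : 0 <= theta^-1 * (l * Ent R K f + (1 - l) * Ent R K g - Ent R K (comb R K l f g)).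
    by apply: mulr_ge0 => //; rewrite subr_ge0.
  rewrite /comb in H H3; lra.
set E := EZ delta Pr t0 c alpha beta Delta theta.
set Q := \sum_(w : W) q w.
have Q0 : 0 <= Q by apply: sumr_ge0.
have [kw hkw] : {kw : W -> K | forall w, od (kw w) = w}.
  by exists (fun w => projT1 (cid (hod w))) => w; exact: (projT2 (cid (hod w))).
have ne : exists f, feasible od q f.
  exists (fun k => if kw (od k) == k then q (od k) else 0); split.
    move=> w; rewrite (bigD1 (kw w)) /=; last by rewrite hkw.
    rewrite hkw eqxx big1 ?addr0 // => k /andP[/eqP okw kk].
    by rewrite okw eq_sym (negbTE kk).
  by move=> k; case: ifP.
have bnd : forall f, feasible od q f -> forall k, -Q <= f k <= Q.
  move=> f' Sf' k; have /andP[a b] := @feas_bound R W K od q f' q0 Sf' k.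
  rewrite -/Q in b; apply/andP; split; lra.
have E2 : 0 <= E (f2 R K Q).
  rewrite /E EZ_R; apply: Rintegral_ge0 => xi _.
  by apply: Zf_ge0 => // k; apply: f2_ge0.
have [f [Sf fmin]] := @exists_min R K (feasible od q) E Q (#|A|%:R * E (f2 R K Q) + theta^-1 * Q) ne
  bnd
  (closed_feas R K W od q)
  ltac:(apply: addr_ge0; [apply: mulr_ge0 => //; exact: ler0n | exact: mulr_ge0])
  (fun f g Sf Sg => @EZ_lip R d T Pr A K delta t0 c alpha beta Delta theta t0p cp alp bep Dep thp HI
     Q Q0 f g (@feas_bound R W K od q f q0 Sf) (@feas_bound R W K od q g q0 Sg)).
exists f; split => // h Sh hmin.
apply: contrapT => hf.
have h0 : forall k, 0 <= h k by case: Sh.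
have f0 : forall k, 0 <= f k by case: Sf.
have hl : 0 <= (2^-1 : R) <= 1.
  by apply/andP; split; lra.
have H := EZc h f 2^-1 h0 f0 hl.
have H2 := Ent_strict R K h f h0 f0 hf.
have H3 : 0 < theta^-1 * (2^-1 * Ent R K h + (1 - 2^-1) * Ent R K f - Ent R K (comb R K 2^-1 h f)).
  by apply: mulr_gt0; [rewrite invr_gt0 | rewrite subr_gt0].
have Smid := @feas_comb R W K od q h f 2^-1 hl Sh Sf.
have a1 := fmin _ Smid.
have a2 := hmin _ Sf.
have a3 := fmin _ Sh.
rewrite -/E in H; lra.
Qed.
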